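(* Fix any total budget $\mathrm{TB}\in\mathbb N_0$ and let $G$ be a number game. Then $G\ge 0$ if and only if $o(G,0)=\mathrm L$.
   Context: Game forms are defined recursively: $G=\{G^{\mathcal L}\mid G^{\mathcal R}\}$ with finite sets of Left and Right options, and finite birthday. $0=\{\varnothing\mid\varnothing\}$. Fix a total budget $\mathrm{TB}\in\mathbb N_0$. The budget set is $\mathcal B=\{0,\dots,\mathrm{TB},\hat 0,\dots,\widehat{\mathrm{TB}}\}$: state $p$ (resp. $\hat p$) means Left holds $p$ dollars and Right holds $\mathrm{TB}-p$, and Right (resp. Left) holds the tie-breaking marker. Play of $(G,\tilde p)$: at every position (terminal ones included) both players bid simultaneously, Left $\ell\in\{0,\dots,p\}$, Right $r\in\{0,\dots,\mathrm{TB}-p\}$. If Left holds the marker (state $\hat p$): if $\ell>r$ Left moves to $(G^L,\widehat{p-\ell})$, or, including the marker (allowed when $\ell\ge r$), to $(G^L,p-\ell)$; if $\ell=r$ Left wins, the marker passes to Right, play continues at $(G^L,p-\ell)$; if $\ell<r$ Right moves to $(G^R,\widehat{p+r})$. Symmetrically when Right holds the marker (state $p$): if $r>\ell$ Right moves to $(G^R,p+r)$ or, including the marker, to $(G^R,\widehat{p+r})$; if $r=\ell$ Right wins, the marker passes to Left, play continues at $(G^R,\widehat{p+r})$; if $r<\ell$ Left moves to $(G^L,p-\ell)$. A player who wins a bid but has no option loses. $o(G,\tilde p)\in\{\mathrm L,\mathrm R\}$ is the winner under optimal play; $\mathrm L>\mathrm R$. Disjunctive sum $G+H=\{G^{\mathcal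 L}+H,G+H^{\mathcal L}\mid G^{\mathcal R}+H,G+H^{\mathcal R}\}$. $G\ge H$ means $o(G+X,\tilde p)\ge o(H+X,\tilde p)$ for all game forms $X$ and all $\tilde p\in\mathcal B$; $G>H$ means $G\ge H$ and not $H\ge G$; $G<H$ means $H>G$. A game form $G$ is a number (for the fixed $\mathrm{TB}$) if all its options are numbers and $G^L<G<G^R$ for every $G^L\in G^{\mathcal L}$, $G^R\in G^{\mathcal R}$. *)

(* Defs.v *)
From Stdlib Require Import List.
From mathcomp Require Import all_boot.
Set Implicit Arguments. Unset Strict Implicit. Unset Printing Implicit Defensive.

(* Game forms: finite lists of Left and Right options (finite birthday is
   automatic for an inductive type). *)
Inductive game : Type := Game : seq game -> seq game -> game.

Definition gzero : game := Game [::] [::].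

Fixpoint gsum (G H : game) {struct G} : game :=
  match G with
  | Game GL GR =>
    let fix aux (H : game) : game :=
      match H with
      | Game HL HR =>
        Game ([seq gsum g H | g <- GL] ++ [seq aux h | h <- HL])
             ([seq gsum g H | g <- GR] ++ [seq aux h | h <- HR])
      end in aux H
  end.

(* Budget state: (p, m) with p = Left's dollars (Right holds TB - p);
   m = true  means the state is  \hat p  (Left holds the tie-break marker),
   m = false means the state is  p       (Right holds the marker).
   [lwins TB G p m] = Left has a winning strategy from (G, state), i.e.
   o(G, state) = L : Left commits to a bid l in {0..p} such that for every
   Right bid r in {0..TB-p} Left wins after the bid is resolved as in the
   rules (the bid winner chooses the option and, when allowed, whether to
   hand over the marker; a bid winner with no option loses). *)
Fixpoint lwins (TB : nat) (G : game) (p : nat) (m : bool) {struct G} : bool :=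
  match G with
  | Game Ls Rs =>
    let Lmove q b := has (fun g => lwins TB g q b) Ls in
    (* Right wins the bid and moves: Left wins iff every Right option loses
       for Right (Right with no option loses) *)
    let Rmove q b := all (fun g => lwins TB g q b) Rs in
    let resolve l r :=
      if m then
        (if r < l then Lmove (p - l) true || Lmove (p - l) false
         else if l == r then Lmove (p - l) false
         else Rmove (p + r) true)
      else
        (if l < r then Rmove (p + r) false && Rmove (p + r) true
         else if l == r then Rmove (p + r) true
         else Lmove (p - l) false) in
    has (fun l => all (fun r => resolve l r) (iota 0 (TB - p).+1)) (iota 0 p.+1)
  end.

(* o(G, p~) = L  iff  lwins TB G p m.  Since L > R,
   o(G+X,p~) >= o(H+X,p~)  iff  (o(H+X,p~) = L -> o(G+X,p~) = L). *)
Definition gge (TB : nat) (G H : game) : Prop :=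
  forall (X : game) (p : nat) (m : bool), p <= TB ->
    lwins TB (gsum H X) p m -> lwins TB (gsum G X) p m.

Definition ggt (TB : nat) (G H : game) : Prop := gge TB G H /\ ~ gge TB H G.

Inductive is_number (TB : nat) : game -> Prop :=
  | is_number_intro (GL GR : seq game) :
      (forall g, List.In g GL -> is_number TB g) ->
      (forall g, List.In g GR -> is_number TB g) ->
      (forall g, List.In g GL -> ggt TB (Game GL GR) g) ->
      (forall g, List.In g GR -> ggt TB g (Game GL GR)) ->
      is_number TB (Game GL GR).

(* Main.v *)
Require Import Defs.
From mathcomp Require Import all_boot.
From mathcomp Require Import zify.
Set Implicit Arguments. Unset Strict Implicit.

Fixpoint game_ind2 (P : game -> Prop)
  (IH : forall Ls Rs, (forall g, List.In g Ls -> P g) ->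
        (forall g, List.In g Rs -> P g) -> P (Game Ls Rs)) (G : game) {struct G} : P G :=
  match G with
  | Game Ls Rs =>
    IH Ls Rs
      ((fix fl (l : seq game) : forall g, List.In g l -> P g :=
          match l with
          | nil => fun g H => match H with end
          | cons h t => fun g H =>
              match H with
              | or_introl e => eq_rect h P (game_ind2 IH h) g e
              | or_intror H' => fl t g H'
              end
          end) Ls)
      ((fix fl (l : seq game) : forall g, List.In g l -> P g :=
          match l with
          | nil => fun g H => match H with end
          | cons h t => fun g H =>
              match H with
              | or_introl e => eq_rect h P (game_ind2 IH h) g e
              | or_intror H' => fl t g H'
              end
          end) Rs)
  end.

Lemma In_cat (T : Type) (x : T) s1 s2 :
  List.In x (s1 ++ s2) <-> List.In x s1 \/ List.In x s2.
Proof.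
elim: s1 => [|y s IH] /=; first by split; [right | case].
split; [case=> [H|/IH]; tauto | case=> [[H|H]|H]; [left|right; apply/IH..]; tauto].
Qed.

Lemma In_map (T U : Type) (f : T -> U) y s :
  List.In y (map f s) <-> exists x, f x = y /\ List.In x s.
Proof.
elim: s => [|x s IH] /=; first by split=> // -[z []].
rewrite IH; split.
- by case=> [<-|[z [<- H]]]; [exists x; tauto | exists z; tauto].
- by case=> z [<- [->|H]]; [left | right; exists z].
Qed.

Lemma hasIn (T : Type) (a : pred T) s : has a s <-> exists2 x, List.In x s & a x.
Proof.
elim: s => [|y s IH] /=; first by split=> // -[].
split.
- by case/orP=> [H|/IH [x H1 H2]]; [exists y; [left|] | exists x; [right|]].
- by case=> x [<-|H1] H2; apply/orP; [left | right; apply/IH; exists x].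
Qed.

Lemma allIn (T : Type) (a : pred T) s : all a s <-> forall x, List.In x s -> a x.
Proof.
elim: s => [|y s IH] //=.
split.
- by case/andP=> H1 /IH H2 x [<-|]; [|apply: H2].
- by move=> H; apply/andP; split; [apply: H; left | apply/IH => x Hx; apply: H; right].
Qed.

Lemma gsumE KL KR XL XR :
  gsum (Game KL KR) (Game XL XR) =
  Game ([seq gsum g (Game XL XR) | g <- KL] ++ [seq gsum (Game KL KR) h | h <- XL])
       ([seq gsum g (Game XL XR) | g <- KR] ++ [seq gsum (Game KL KR) h | h <- XR]).
Proof. by []. Qed.

Definition Lmv TB (Ls : seq game) q b := has (fun g => lwins TB g q b) Ls.
Definition Rmv TB (Rs : seq game) q b := all (fun g => lwins TB g q b) Rs.
Definition res TB Ls Rs p (m : bool) l r : bool :=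
  if m then
    (if r < l then Lmv TB Ls (p - l) true || Lmv TB Ls (p - l) false
     else if l == r then Lmv TB Ls (p - l) false
     else Rmv TB Rs (p + r) true)
  else
    (if l < r then Rmv TB Rs (p + r) false && Rmv TB Rs (p + r) true
     else if l == r then Rmv TB Rs (p + r) true
     else Lmv TB Ls (p - l) false).

Lemma lwinsE TB Ls Rs p m : lwins TB (Game Ls Rs) p m =
  has (fun l => all (fun r => res TB Ls Rs p m l r) (iota 0 (TB - p).+1)) (iota 0 p.+1).
Proof. by []. Qed.

Lemma lwinsP TB Ls Rs p m : lwins TB (Game Ls Rs) p m <->
  exists2 l, l <= p & (forall r, r <= TB - p -> res TB Ls Rs p m l r).
Proof.
rewrite lwinsE; split.
- move/hasP=> [l]; rewrite mem_iota add0n ltnS => /andP[_ hl] /allP H.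
  exists l => // r hr; apply: H; rewrite mem_iota add0n ltnS hr; lia.
- move=> [l hl H]; apply/hasP; exists l; first by rewrite mem_iota add0n ltnS hl; lia.
  apply/allP => r; rewrite mem_iota add0n ltnS => /andP[_ hr]; exact: H.
Qed.

Lemma LmvP TB Ls q b : Lmv TB Ls q b <-> exists2 g, List.In g Ls & lwins TB g q b.
Proof. exact: hasIn. Qed.
Lemma RmvP TB Rs q b : Rmv TB Rs q b <-> forall g, List.In g Rs -> lwins TB g q b.
Proof. exact: allIn. Qed.

Lemma mono TB K : forall q, q < TB ->
  (lwins TB K q false -> lwins TB K q.+1 false) /\
  (lwins TB K q true -> forall b, lwins TB K q.+1 b).
Proof.
elim/game_ind2: K => Ls Rs IHL IHR q hq.
have RmvF : forall s, s < TB -> Rmv TB Rs s false -> Rmv TB Rs s.+1 false.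
  move=> s hs /RmvP H; apply/RmvP => g gi; exact: (proj1 (IHR g gi s hs) (H g gi)).
have RmvT : forall s b, s < TB -> Rmv TB Rs s true -> Rmv TB Rs s.+1 b.
  move=> s b hs /RmvP H; apply/RmvP => g gi; exact: (proj2 (IHR g gi s hs) (H g gi)).
have LmvF : forall s, s < TB -> Lmv TB Ls s false -> Lmv TB Ls s.+1 false.
  move=> s hs /LmvP [g gi H]; apply/LmvP; exists g => //; exact: (proj1 (IHL g gi s hs) H).
have LmvT : forall s b, s < TB -> Lmv TB Ls s true -> Lmv TB Ls s.+1 b.
  move=> s b hs /LmvP [g gi H]; apply/LmvP; exists g => //; exact: (proj2 (IHL g gi s hs) H).
split.
- move/lwinsP=> [l hl H]; apply/lwinsP; exists l; first lia.
  move=> r hr; have := H r (ltac:(lia)); rewrite /res.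
  case: (ltngtP l r) => hlr /=.
  + case/andP=> h1 h2; rewrite addSn; apply/andP; split;
      [apply: RmvF | apply: RmvT]; by [lia|].
  + rewrite subSn; last lia. apply: LmvF; lia.
  + subst; rewrite addSn; apply: RmvT; by [lia|].
- move/lwinsP=> [l hl H] [].
  + apply/lwinsP; exists l; first lia.
    move=> r hr; have := H r (ltac:(lia)); rewrite /res.
    case: (ltngtP l r) => hlr /=.
    * rewrite addSn; apply: RmvT; lia.
    * rewrite subSn; last lia.
      case/orP=> h; apply/orP; [left; apply: LmvT | right; apply: LmvF]; by [lia|].
    * subst; rewrite subSn; last lia. apply: LmvF; lia.
  + case: (leqP l (TB - q)) => hlt.
    * have tie : Lmv TB Ls (q - l) false.
        by have := H l hlt; rewrite /res ltnn eqxx.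
      apply/lwinsP; exists l.+1; first lia.
      move=> r hr; rewrite /res.
      case: (ltngtP l.+1 r) => hlr /=.
      - have := H r (ltac:(lia)); rewrite /res.
        have -> : r < l = false by lia.
        have -> : l == r = false by lia.
        move=> h; rewrite addSn; apply/andP; split; apply: RmvT => //; lia.
      - by rewrite subSS.
      - subst r; have := H l.+1 (ltac:(lia)); rewrite /res ltnNge leqnSn /=.
        have -> : l == l.+1 = false by lia.
        move=> h; rewrite addSn; apply: RmvT => //; lia.
    * have h0 : Lmv TB Ls (q - l) true || Lmv TB Ls (q - l) false.
        have := H 0 (ltac:(lia)); rewrite /res.
        by have -> : 0 < l by lia.
      apply/lwinsP; exists l; first lia.
      move=> r hr; rewrite /res.
      have -> : l < r = false by lia.
      have -> : l == r = false by lia.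
      rewrite subSn; last lia.
      case/orP: h0 => h; [apply: LmvT | apply: LmvF]; by [lia|].
Qed.

Lemma monoF TB K q q' : q <= q' <= TB -> lwins TB K q false -> lwins TB K q' false.
Proof.
move=> /andP[h1 h2] H; have -> : q' = q + (q' - q) by lia.
have : q + (q' - q) <= TB by lia.
elim: (q' - q) => [|d IH] hd; first by rewrite addn0.
rewrite addnS; apply: (proj1 (mono K (ltac:(lia) : q + d < TB))); apply: IH; lia.
Qed.

Lemma monoT TB K q q' b : q < q' <= TB -> lwins TB K q true -> lwins TB K q' b.
Proof.
move=> /andP[h1 h2] H; have -> : q' = q.+1 + (q' - q.+1) by lia.
have : q.+1 + (q' - q.+1) <= TB by lia.
elim: (q' - q.+1) b => [|d IH] b hd.
- rewrite addn0; exact: (proj2 (mono K (ltac:(lia) : q < TB))).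
- rewrite addnS; apply: (proj2 (mono K (ltac:(lia) : q.+1 + d < TB))); apply: IH; lia.
Qed.

Lemma map_id_In (T : Type) (f : T -> T) s :
  (forall x, List.In x s -> f x = x) -> map f s = s.
Proof.
elim: s => [|y s IH] //= H; rewrite H; last by left.
by rewrite IH // => x hx; apply: H; right.
Qed.

Lemma gsum0l X : gsum gzero X = X.
Proof.
elim/game_ind2: X => XL XR IHL IHR.
have -> : gsum gzero (Game XL XR) = Game (map (gsum gzero) XL) (map (gsum gzero) XR) by [].
by rewrite !map_id_In.
Qed.

Lemma gsum0r G : gsum G gzero = G.
Proof.
elim/game_ind2: G => GL GR IHL IHR.
rewrite /gzero gsumE /= !cats0.
by congr Game; apply: map_id_In; [exact: IHL | exact: IHR].
Qed.

Lemma gge_trans TB A B C : gge TB A B -> gge TB B C -> gge TB A C.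
Proof. by move=> h1 h2 X p m hp h; apply: h1 => //; apply: h2. Qed.

Lemma Lmv_sumK TB KL KR XL XR k q b :
  List.In k KL -> lwins TB (gsum k (Game XL XR)) q b ->
  Lmv TB ([seq gsum g (Game XL XR) | g <- KL] ++ [seq gsum (Game KL KR) h | h <- XL]) q b.
Proof.
move=> ki h; apply/LmvP; exists (gsum k (Game XL XR)) => //.
by apply/In_cat; left; apply/In_map; exists k.
Qed.

Lemma Lmv_sumX TB KL KR XL XR x q b :
  List.In x XL -> lwins TB (gsum (Game KL KR) x) q b ->
  Lmv TB ([seq gsum g (Game XL XR) | g <- KL] ++ [seq gsum (Game KL KR) h | h <- XL]) q b.
Proof.
move=> xi h; apply/LmvP; exists (gsum (Game KL KR) x) => //.
by apply/In_cat; right; apply/In_map; exists x.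
Qed.

Lemma Rmv_sum TB KL KR XL XR q b :
  (forall k, List.In k KR -> lwins TB (gsum k (Game XL XR)) q b) ->
  (forall x, List.In x XR -> lwins TB (gsum (Game KL KR) x) q b) ->
  Rmv TB ([seq gsum g (Game XL XR) | g <- KR] ++ [seq gsum (Game KL KR) h | h <- XR]) q b.
Proof.
move=> h1 h2; apply/RmvP => g /In_cat [] /In_map [y [<- yi]]; [exact: h1 | exact: h2].
Qed.

Lemma resTlt TB Ls Rs p l r : r < l ->
  res TB Ls Rs p true l r = Lmv TB Ls (p - l) true || Lmv TB Ls (p - l) false.
Proof. by rewrite /res => ->. Qed.
Lemma resTeq TB Ls Rs p l : res TB Ls Rs p true l l = Lmv TB Ls (p - l) false.
Proof. by rewrite /res ltnn eqxx. Qed.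
Lemma resTgt TB Ls Rs p l r : l < r -> res TB Ls Rs p true l r = Rmv TB Rs (p + r) true.
Proof. move=> h; rewrite /res ltnNge (ltnW h) /=; by have -> : (l == r) = false by lia. Qed.
Lemma resFlt TB Ls Rs p l r : l < r ->
  res TB Ls Rs p false l r = Rmv TB Rs (p + r) false && Rmv TB Rs (p + r) true.
Proof. by rewrite /res => ->. Qed.
Lemma resFeq TB Ls Rs p l : res TB Ls Rs p false l l = Rmv TB Rs (p + l) true.
Proof. by rewrite /res ltnn eqxx. Qed.
Lemma resFgt TB Ls Rs p l r : r < l -> res TB Ls Rs p false l r = Lmv TB Ls (p - l) false.
Proof. move=> h; rewrite /res ltnNge (ltnW h) /=; by have -> : (l == r) = false by lia. Qed.


Definition core TB K := forall X p, p <= TB -> lwins TB X p false -> lwins TB (gsum K X) p true.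

Lemma main TB K : is_number TB K ->
  (lwins TB K 0 false -> gge TB K gzero) /\
  (lwins TB K 0 true -> gge TB K gzero /\ core TB K).
Proof.
elim=> KL KR _ IHL _ IHR hL hR.
split.
- move=> W.
  have UR : forall g, List.In g KR -> lwins TB g 0 true.
    move: W => /lwinsP [l hl H]; have l0 : l = 0 by lia.
    subst l; have := H 0 (leq0n _); rewrite resFeq.
    by move/RmvP.
  have posR : forall g, List.In g KR -> gge TB g gzero /\ core TB g.
    by move=> g gi; exact: (proj2 (IHR g gi) (UR g gi)).
  move=> X p m hp; rewrite gsum0l.
  elim/game_ind2: X p m hp => XL XR IHXL IHXR p m hp hX.
  move: (hX) => /lwinsP [l hl H].
  rewrite gsumE; apply/lwinsP; exists l => // r hr.
  have := H r hr; case: m hX H => hX H; case: (ltngtP l r) => hlr.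
  + rewrite !resTgt //.
    move=> h; apply: Rmv_sum.
    * move=> k ki; apply: (proj1 (posR k ki)); first lia.
      rewrite gsum0l; apply: monoT hX; lia.
    * move=> x xi; apply: IHXR => //; first lia. exact: (proj1 (RmvP _ _ _ _) h x xi).
  + rewrite !resTlt //.
    case/orP=> h; apply/orP; [left|right]; move/LmvP: h => [x xi hx];
      apply: (Lmv_sumX _ xi); apply: (IHXL x xi) => //; lia.
  + subst; rewrite !resTeq.
    move/LmvP => [x xi hx]; apply: (Lmv_sumX _ xi); apply: (IHXL x xi) => //; lia.
  + rewrite !resFlt //.
    case/andP=> h1 h2; apply/andP; split; apply: Rmv_sum.
    * move=> k ki; apply: (proj1 (posR k ki)); first lia.
      rewrite gsum0l; apply: monoF hX; lia.
    * move=> x xi; apply: IHXR => //; first lia. exact: (proj1 (RmvP _ _ _ _) h1 x xi).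
    * move=> k ki; apply: (proj2 (posR k ki)); first lia.
      apply: monoF hX; lia.
    * move=> x xi; apply: IHXR => //; first lia. exact: (proj1 (RmvP _ _ _ _) h2 x xi).
  + rewrite !resFgt //.
    move/LmvP => [x xi hx]; apply: (Lmv_sumX _ xi); apply: (IHXL x xi) => //; lia.
  + subst; rewrite !resFeq.
    move=> h; apply: Rmv_sum.
    * move=> k ki; apply: (proj2 (posR k ki)); first lia.
      apply: monoF hX; lia.
    * move=> x xi; apply: IHXR => //; first lia. exact: (proj1 (RmvP _ _ _ _) h x xi).
- move=> U.
  have [kL kLi WkL] : exists2 g, List.In g KL & lwins TB g 0 false.
    move: U => /lwinsP [l hl H]; have l0 : l = 0 by lia.
    subst l; have := H 0 (leq0n _); rewrite resTeq.
    by move/LmvP.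
  have Kpos : gge TB (Game KL KR) gzero.
    apply: gge_trans (proj1 (hL kL kLi)) _.
    exact: (proj1 (IHL kL kLi) WkL).
  split => //.
  move=> X; elim/game_ind2: X => XL XR IHXL IHXR p hp hX.
  suff S : forall n p, TB - p < n -> p <= TB -> lwins TB (Game XL XR) p false ->
      lwins TB (gsum (Game KL KR) (Game XL XR)) p true.
    by apply: (S (TB - p).+1).
  elim=> [|n IHn] {hp hX} p hn hp hX; first lia.
  have budget : forall r, 0 < r -> r <= TB - p ->
      lwins TB (gsum (Game KL KR) (Game XL XR)) (p + r) true.
    move=> r r0 hr; apply: IHn; try lia. apply: monoF hX; lia.
  have KR_ok : forall r, 0 < r -> r <= TB - p -> forall k, List.In k KR ->
      lwins TB (gsum k (Game XL XR)) (p + r) true.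
    move=> r r0 hr k ki; apply: (proj1 (hR k ki)); first lia. exact: budget.
  move: (hX) => /lwinsP [l hl H].
  rewrite gsumE.
  case: l hl H => [|l] hl H.
  + apply/lwinsP; exists 0 => // r hr.
    case: r hr => [|r] hr.
    * rewrite resTeq; apply: (Lmv_sumK _ kLi); rewrite subn0.
      have := (proj1 (IHL kL kLi) WkL) (Game XL XR) p false hp.
      by rewrite gsum0l; apply.
    * rewrite resTgt //; apply: Rmv_sum; first exact: KR_ok.
      move=> x xi; have := H r.+1 hr; rewrite resFlt //.
      case/andP=> h1 _; apply: IHXR => //; first lia.
      exact: (proj1 (RmvP _ _ _ _) h1 x xi).
  + apply/lwinsP; exists l; first lia.
    move=> r hr.
    case: (ltngtP l r) => hlr.
    * rewrite resTgt //; apply: Rmv_sum; first by apply: KR_ok; lia.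
      move=> x xi; have := H r hr.
      case: (ltngtP l.+1 r) => h2.
      - rewrite resFlt //; case/andP=> h1 _; apply: IHXR => //; first lia.
        exact: (proj1 (RmvP _ _ _ _) h1 x xi).
      - lia.
      - subst r; rewrite resFeq => h1; apply: Kpos; first lia.
        rewrite gsum0l; exact: (proj1 (RmvP _ _ _ _) h1 x xi).
    * rewrite resTlt //; apply/orP; left.
      have := H r hr; rewrite resFgt; last lia.
      move/LmvP => [x xi hx]; apply: (Lmv_sumX _ xi).
      apply: (IHXL x xi); first lia. apply: monoF hx; lia.
    * subst r; rewrite resTeq.
      have := H l hr; rewrite resFgt; last lia.
      move/LmvP => [x xi hx]; apply: (Lmv_sumX _ xi).
      apply: Kpos; first lia.
      rewrite gsum0l; apply: monoF hx; lia.
Qed.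

Theorem mainTheorem2 (TB : nat) (G : game) :
  is_number TB G -> (gge TB G gzero <-> lwins TB G 0 false).
Proof.
move=> hG; split; last exact: (proj1 (main hG)).
move=> hge; have := hge gzero 0 false (leq0n _).
rewrite !gsum0r; apply.
apply/lwinsP; exists 0 => // r hr.
case: r hr => [|r] hr; [rewrite resFeq | rewrite resFlt //]; by [].
Qed.
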